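(* Let $\mathbf{M}\in\mathcal{M}_T(n)$ with $\mathbf{M}\neq 0$. Set $\sigma=\|\mathbf{M}\hat{\mathbf{1}}\|_2$ and $\hat{\mathbf{u}}=\mathbf{M}\hat{\mathbf{1}}/\|\mathbf{M}\hat{\mathbf{1}}\|_2$. Then $\hat{\mathbf{u}}$ and $\hat{\mathbf{1}}$ are orthonormal and $\mathbf{M}=\sigma\,(\hat{\mathbf{u}},-\hat{\mathbf{1}})(\hat{\mathbf{1}},\hat{\mathbf{u}})^\top$, which is a singular value decomposition of $\mathbf{M}$ with both nonzero singular values equal to $\sigma$.
   Context: $\hat{\mathbf{1}}=(1,\dots,1)^\top/\sqrt{n}\in\mathbb{R}^n$; $(\mathbf{a},\mathbf{b})$ denotes the $n\times 2$ matrix with columns $\mathbf{a},\mathbf{b}$. A TDOA matrix is an $n\times n$ real matrix whose $(i,j)$ entry is $\tau_i-\tau_j$ for some $(\tau_1,\dots,\tau_n)\in\mathbb{R}^n$; $\mathcal{M}_T(n)$ is the set of all $n\times n$ TDOA matrices. *)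

(* Defs.v *)
From mathcomp Require Import all_boot all_order all_algebra.
Set Implicit Arguments. Unset Strict Implicit. Unset Printing Implicit Defensive.
Import Order.TTheory GRing.Theory Num.Theory.
Local Open Scope ring_scope.

Definition is_tdoa (R : ringType) (n : nat) (M : 'M[R]_n) : Prop :=
  exists tau : 'I_n -> R, forall i j : 'I_n, M i j = tau i - tau j.

Definition norm2 (R : rcfType) (n : nat) (v : 'cV[R]_n) : R :=
  Num.sqrt (\sum_(i < n) v i 0 ^+ 2).

Definition one_hat (R : rcfType) (n : nat) : 'cV[R]_n :=
  (Num.sqrt (n%:R))^-1 *: const_mx 1.

(* Main.v *)
Require Import Defs.
From mathcomp Require Import all_boot all_order all_algebra.
From mathcomp Require Import ring.
Import Order.TTheory GRing.Theory Num.Theory.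
Local Open Scope ring_scope.

Lemma dotE (R : comRingType) (n : nat) (x y : 'cV[R]_n) (a : R) :
  \sum_i x i 0 * y i 0 = a -> x^T *m y = a%:M.
Proof.
move=> H; apply/matrixP => i j; rewrite !ord1 !mxE eqxx mulr1n -H.
by apply: eq_bigr => k _; rewrite !mxE.
Qed.

Arguments dotE {R n x y a}.

Lemma outerE (R : comRingType) (n : nat) (x y : 'cV[R]_n) i j :
  (x *m y^T) i j = x i 0 * y j 0.
Proof. by rewrite !mxE big_ord1 !mxE. Qed.

Theorem lemma1 (R : rcfType) (n : nat) (M : 'M[R]_n) :
  is_tdoa M -> M != 0 ->
  let e := one_hat R n in
  let sigma := norm2 (M *m e) in
  let u := sigma^-1 *: (M *m e) in
  let U := row_mx u (- e) in
  let V := row_mx e u in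
  (* hat u and hat 1 are orthonormal *)
  [/\ norm2 u = 1, norm2 e = 1 & u^T *m e = 0] /\
  (* M = sigma (u, -1hat)(1hat, u)^T *)
  M = sigma *: (U *m V^T) /\
  (* this is a (thin) SVD: orthonormal columns, singular values sigma, sigma > 0 *)
  [/\ U^T *m U = 1%:M, V^T *m V = 1%:M, 0 < sigma &
      M = U *m (sigma%:M : 'M_(1 + 1)) *m V^T].
Proof.
move=> [tau Htau] M0 e sigma u U V.
have n0 : (0 < n)%N.
  rewrite lt0n; apply/negP => /eqP nz; move/eqP: M0; apply; apply/matrixP => i.
  by have := ltn_ord i; rewrite {2}nz.
pose c := (Num.sqrt (n%:R : R))^-1.
have sn : 0 < Num.sqrt (n%:R : R) by rewrite sqrtr_gt0 ltr0n.
have c2 : c ^+ 2 * n%:R = 1.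
  by rewrite /c exprVn sqr_sqrtr ?ler0n // mulVf // pnatr_eq0 -lt0n.
have ec : forall i, e i 0 = c by move=> i; rewrite /e /one_hat !mxE mulr1.
pose w := M *m e.
pose s := \sum_j tau j.
have wE : forall i, w i 0 = c * (n%:R * tau i - s).
  move=> i; rewrite mxE.
  rewrite (eq_bigr (fun j => c * (tau i - tau j))); last first.
    by move=> j _; rewrite Htau ec mulrC.
  by rewrite -mulr_sumr sumrB sumr_const card_ord mulr_natl.
have hsum : \sum_i w i 0 = 0.
  rewrite (eq_bigr (fun i => c * (n%:R * tau i - s))); last by move=> i _; rewrite wE.
  by rewrite -mulr_sumr sumrB -mulr_sumr sumr_const card_ord mulr_natl subrr mulr0.
have hM : forall i j, M i j = c * (w i 0 - w j 0).
  move=> i j; rewrite !wE Htau.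
  have -> : c * (c * (n%:R * tau i - s) - c * (n%:R * tau j - s))
     = c ^+ 2 * n%:R * (tau i - tau j) by ring.
  by rewrite c2 mul1r.
pose S := \sum_i w i 0 ^+ 2.
have S0 : 0 < S.
  rewrite lt0r sumr_ge0 ?andbT; last by move=> i _; rewrite sqr_ge0.
  apply/eqP => HS; move/eqP: M0; apply; apply/matrixP => i j.
  have := psumr_eq0P (fun k _ => sqr_ge0 (w k 0)) HS.
  move=> H; rewrite hM [RHS]mxE.
  by move: (H i isT) (H j isT) => /eqP; rewrite sqrf_eq0 => /eqP -> /eqP; rewrite sqrf_eq0 => /eqP ->; rewrite subrr mulr0.
have sigE : sigma = Num.sqrt S by [].
have sig0 : 0 < sigma by rewrite sigE sqrtr_gt0.
have sig2 : sigma ^+ 2 = S by rewrite sigE sqr_sqrtr // ltW.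
have sigN : sigma != 0 by rewrite gt_eqF.
have uE : forall i, u i 0 = sigma^-1 * w i 0 by move=> i; rewrite mxE.
have uu : \sum_i u i 0 * u i 0 = 1.
  rewrite (eq_bigr (fun i => sigma^-1 ^+ 2 * w i 0 ^+ 2)); last first.
    by move=> i _; rewrite uE -expr2 exprMn.
  by rewrite -mulr_sumr -/S -sig2 exprVn mulVf // expf_neq0.
have ee : \sum_i e i 0 * e i 0 = 1.
  rewrite (eq_bigr (fun i => c ^+ 2)); last by move=> i _; rewrite ec expr2.
  by rewrite sumr_const card_ord -mulr_natr c2.
have ue : \sum_i u i 0 * e i 0 = 0.
  rewrite (eq_bigr (fun i => sigma^-1 * c * w i 0)); last first.
    by move=> i _; rewrite uE ec mulrAC.
  by rewrite -mulr_sumr hsum mulr0.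
have eu : \sum_i e i 0 * u i 0 = 0.
  by rewrite -[RHS]ue; apply: eq_bigr => i _; rewrite mulrC.
have n2 : forall x : 'cV[R]_n, \sum_i x i 0 * x i 0 = 1 -> norm2 x = 1.
  move=> x Hx; rewrite /norm2.
  have -> : \sum_(i < n) x i 0 ^+ 2 = \sum_(i < n) x i 0 * x i 0.
    by apply: eq_bigr => i _; rewrite expr2.
  by rewrite Hx sqrtr1.
have Mdec : M = sigma *: (U *m V^T).
  apply/matrixP => i j; rewrite [in RHS]mxE.
  have -> : (U *m V^T) i j = u i 0 * e j 0 + (- e) i 0 * u j 0.
    by rewrite /U /V tr_row_mx mul_row_col [(_ + _ : 'M[R]_n) i j]mxE !outerE.
  rewrite hM [(- e) i 0]mxE !uE !ec; field; exact: sigN.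
have scal0 : forall m, (0 : R)%:M = 0 :> 'M[R]_m.
  by move=> m; apply/matrixP => i j; rewrite !mxE mul0rn.
split; first by split; [apply: n2 | apply: n2 | rewrite (dotE ue) scal0].
split; first exact: Mdec.
split => //.
- rewrite /U tr_row_mx mul_col_mx !mul_mx_row scalar_mx_block /block_mx.
  have -> : (- e)^T = - e^T by apply/matrixP => i j; rewrite !mxE.
  rewrite mulNmx mulmxN mulmxN mulNmx opprK.
  by rewrite (dotE uu) (dotE ue) (dotE eu) (dotE ee) !scal0 oppr0.
- rewrite /V tr_row_mx mul_col_mx !mul_mx_row scalar_mx_block /block_mx.
  by rewrite (dotE uu) (dotE ue) (dotE eu) (dotE ee) !scal0.
- by rewrite mul_mx_scalar -scalemxAl.
Qed.
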